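(* Let $T$ be a tree on $n\ge 2$ vertices, $k\ge 3$ odd, and $M$ the order-$k$ Steiner distance hypermatrix of $T$. Then $M(\mathbf{c},\ldots,\mathbf{c})=0$ for every $\mathbf{c}\in\mathcal{H}_n$.
   Context: $T$ is a tree with vertex set $\{1,\dots,n\}$. For $U\subseteq V(T)$, the Steiner distance $S(U)$ is the minimum number of edges of a connected subgraph of $T$ whose vertex set contains $U$. The order-$k$ Steiner distance hypermatrix $M$ has entries $M_{(i_1,\dots,i_k)}=S(\{i_1,\dots,i_k\})$, and $M(\mathbf{x}_1,\dots,\mathbf{x}_k)=\sum_{\mathbf{i}\in V(T)^k}M_{\mathbf{i}}\prod_{j=1}^k x_{j i_j}$. $\mathcal{H}_n=\{\mathbf{c}\in\mathbb{R}^n:\sum_i c_i=0\}$. *)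

(* Defs.v *)
From mathcomp Require Import all_boot all_order all_algebra.
Set Implicit Arguments. Unset Strict Implicit. Unset Printing Implicit Defensive.
Import Order.TTheory GRing.Theory Num.Theory.

Definition is_tree (n : nat) (e : rel 'I_n) : Prop :=
  symmetric e /\ irreflexive e /\
  (forall x y : 'I_n, connect e x y) /\
  (forall p : seq 'I_n, uniq p -> 2 < size p -> ~~ cycle e p).

Definition is_subgraph n (e : rel 'I_n) (W : {set 'I_n}) (F : {set {set 'I_n}}) :=
  [forall f in F, exists x, exists y, [&& e x y, x \in W, y \in W & f == [set x; y]]].

Definition sub_rel n (W : {set 'I_n}) (F : {set {set 'I_n}}) : rel 'I_n :=
  fun u v => [&& u \in W, v \in W & [set u; v] \in F].

Definition is_connected_subgraph n (e : rel 'I_n) (W : {set 'I_n}) (F : {set {set 'I_n}}) :=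
  is_subgraph e W F &&
  [forall x in W, forall y in W, connect (sub_rel W F) x y].

(* Steiner distance: min number of edges of a connected subgraph whose vertex
   set contains U (default n is never attained for trees, since the whole tree
   qualifies with n-1 edges). *)
Definition steiner n (e : rel 'I_n) (U : {set 'I_n}) : nat :=
  \big[minn/n]_(p : {set 'I_n} * {set {set 'I_n}} |
                 is_connected_subgraph e p.1 p.2 && (U \subset p.1)) #|p.2|.

(* M(c,...,c) for the order-k Steiner distance hypermatrix. *)
Definition steiner_form (R : nzRingType) n k (e : rel 'I_n) (c : 'I_n -> R) : R :=
  \sum_(i : {ffun 'I_k -> 'I_n})
     (steiner e [set i j | j : 'I_k])%:R * \prod_(j : 'I_k) c (i j).

(* Main.v *)
Require Import Defs.
From mathcomp Require Import all_boot all_order all_algebra.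
From mathcomp Require Import zify.
Set Implicit Arguments. Unset Strict Implicit. Unset Printing Implicit Defensive.
Import Order.TTheory GRing.Theory Num.Theory.

Lemma conn_split (T : finType) (g h : rel T) (P : pred T) :
  (forall s t, g s t -> h s t || P s) -> forall u v, connect g u v ->
  connect h u v \/ exists2 w, P w & connect h u w /\ connect g u w.
Proof.
move=> H u v /connectP[p gp ->]; elim: p u gp => [|y p IH] u /=.
  by move=> _; left; apply: connect0.
move/andP=> [guy gp]; case/orP: (H _ _ guy) => [huy|Pu].
  case: (IH y gp) => [cc|[w Pw [cc cg]]]; [left|right; exists w => //].
    exact: connect_trans (connect1 huy) cc.
  by split; [exact: connect_trans (connect1 huy) cc|exact: connect_trans (connect1 guy) cg].
by right; exists u => //; split; apply: connect0.
Qed.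

Lemma cross_path (T : finType) (g : rel T) (A : pred T) u p :
  path g u p -> A u -> ~~ A (last u p) ->
  exists s t, [/\ g s t, A s, ~~ A t, s \in u :: p & t \in u :: p].
Proof.
elim: p u => [|y p IH] u /=; first by move=> _ ->.
move=> /andP[guy gp] Au nAl; case Ay: (A y).
  have [s [t [g1 g2 g3 g4 g5]]] := IH y gp Ay nAl.
  by exists s, t; split => //; rewrite inE ?g4 ?g5 orbT.
by exists u, y; rewrite Ay; split => //; rewrite !inE eqxx ?orbT.
Qed.

Fixpoint steps (T : Type) (x : T) (p : seq T) : seq (T * T) :=
  if p is y :: p' then (x, y) :: steps y p' else [::].

Lemma steps_path (T : eqType) (h : rel T) x p :
  (forall s t, (s, t) \in steps x p -> h s t) -> path h x p.
Proof.
elim: p x => [|y p IH] x //= H.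
by rewrite H ?inE ?eqxx // IH // => s t st; apply: H; rewrite inE st orbT.
Qed.

Lemma bigmin_le (I : finType) (P : pred I) (F : I -> nat) i0 d :
  P i0 -> \big[minn/d]_(i | P i) F i <= F i0.
Proof.
move=> Pi; rewrite unlock; have : i0 \in index_enum I by rewrite mem_index_enum.
elim: (index_enum I) => [//|j r IH] /=; rewrite inE => /orP[/eqP<-|/IH H].
  by rewrite Pi geq_minl.
by case: ifP => // _; apply: leq_trans H; rewrite geq_minr.
Qed.

Lemma bigmin_ge (I : finType) (P : pred I) (F : I -> nat) d m :
  m <= d -> (forall i, P i -> m <= F i) -> m <= \big[minn/d]_(i | P i) F i.
Proof. by move=> md H; elim/big_ind: _ => // x y; rewrite leq_min => -> ->. Qed.

Section Tree.
Variable n : nat.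
Variable e : rel 'I_n.
Hypothesis esym : symmetric e.
Hypothesis eirr : irreflexive e.
Hypothesis econn : forall x y : 'I_n, connect e x y.
Hypothesis eacyc : forall p : seq 'I_n, uniq p -> 2 < size p -> ~~ cycle e p.

Definition del (f : {set 'I_n}) : rel 'I_n := fun s t => e s t && ([set s; t] != f).

Lemma del_sym f : symmetric (del f).
Proof. by move=> s t; rewrite /del esym setUC. Qed.

Lemma del_csym f x y : connect (del f) x y = connect (del f) y x.
Proof. exact: (sym_connect_sym (@del_sym f)). Qed.

Lemma set2_e s t x y : [set s; t] = [set x; y] -> e x y -> e s t.
Proof.
move=> H exy.
have : s \in [set x; y] by rewrite -H set21.
have : t \in [set x; y] by rewrite -H set22.
have : x \in [set s; t] by rewrite H set21.
have : y \in [set s; t] by rewrite H set22.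
move=> /set2P[] Hy /set2P[] Hx /set2P[] Ht /set2P[] Hs; subst => //;
  first [ by rewrite eirr in exy | by rewrite esym ].
Qed.

Lemma noconn a b : e a b -> ~~ connect (del [set a; b]) a b.
Proof.
move=> eab; apply/negP => /connectP[p dp lp].
case/shortenP: dp lp => p' dp' up' _ lp'.
have ep' : path e a p' by apply: sub_path dp' => s t /andP[].
apply: (negP (eacyc up' _)); last first.
  by rewrite /= rcons_path ep' -lp' esym eab.
case: p' dp' up' lp' {ep'} => [|y [|z q]] //=.
  by move=> _ _ ab; move: eab; rewrite -ab eirr.
move=> H _ Hb; move: H; rewrite /del -Hb eqxx /=. by rewrite andbF.
Qed.

Lemma side_cover a b x : connect (del [set a; b]) x a || connect (del [set a; b]) x b.
Proof.
have H : forall s t, e s t -> del [set a; b] s t || (s \in [set a; b]).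
  move=> s t est; rewrite /del est /=; case: eqP => // <-; by rewrite set21 orbT.
case: (conn_split H (econn x a)) => [->//|[w /set2P[]-> [-> _]]]; by rewrite ?orbT.
Qed.

Lemma cross_edge a b x y : e a b -> connect (del [set a; b]) x a ->
  connect (del [set a; b]) y b -> e x y -> [set x; y] = [set a; b].
Proof.
move=> eab cxa cyb exy; apply/eqP; apply: contraNT (noconn eab) => neq.
have dxy : del [set a; b] x y by rewrite /del exy.
rewrite del_csym in cxa.
exact: connect_trans (connect_trans cxa (connect1 dxy)) cyb.
Qed.

Lemma path_del x y q z : path e z q -> x \notin z :: q -> path (del [set x; y]) z q.
Proof.
elim: q z => [|w q IH] z //= /andP[ezw pq]; rewrite inE negb_or => /andP[xz xq].
rewrite IH // andbT /del ezw /=; apply/eqP => H.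
have : x \in [set z; w] by rewrite H set21.
rewrite in_set2 (negbTE xz) /=; move: xq; rewrite inE negb_or => /andP[/negbTE -> _].
by [].
Qed.

Lemma path_sep p x : path e x p -> uniq (x :: p) -> forall s t, (s, t) \in steps x p ->
 [/\ e s t, connect (del [set s; t]) x s, connect (del [set s; t]) (last x p) t,
     s \in x :: p & t \in x :: p].
Proof.
elim: p x => [|y p IH] x //= /andP[exy pp] /andP[xnin up] s t.
rewrite inE => /orP[/eqP[-> ->]|st].
  split => //; rewrite ?inE ?eqxx ?orbT //.
  by rewrite del_csym; apply/connectP; exists p => //; apply: path_del.
have [est c1 c2 sm tm] := IH y pp up s t st.
have dxy : del [set s; t] x y.
  rewrite /del exy /=; apply/eqP => H.
  have : x \in [set s; t] by rewrite -H set21.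
  by case/set2P => Hx; move: xnin; rewrite Hx ?sm ?tm.
split => //; [exact: connect_trans (connect1 dxy) c1 | by rewrite inE sm orbT | by rewrite inE tm orbT].
Qed.

Definition side a b : {set 'I_n} := [set x | connect (del [set a; b]) x a].

Lemma sideC a b : e a b -> side b a = ~: side a b.
Proof.
move=> eab; apply/setP => x; rewrite !inE setUC.
case Ha: (connect (del [set a; b]) x a); case Hb: (connect (del [set a; b]) x b) => //.
  exfalso; rewrite del_csym in Ha; move/negP: (noconn eab); apply; exact: connect_trans Ha Hb.
by move: (side_cover a b x); rewrite Ha Hb.
Qed.

Definition sepb (U : {set 'I_n}) a b := ~~ (U \subset side b a) && ~~ (U \subset side a b).
Definition EP := [set p : 'I_n * 'I_n | (p.1 < p.2) && e p.1 p.2].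
Definition SP U := [set p in EP | sepb U p.1 p.2].

Lemma SP_EP U p : p \in SP U -> p \in EP.
Proof. by rewrite inE => /andP[]. Qed.

Lemma pair_inj : {in EP &, injective (fun p : 'I_n * 'I_n => [set p.1; p.2])}.
Proof.
move=> [a b] [a' b']; rewrite !inE /= => /andP[lab _] /andP[lab' _] H.
have : a \in [set a'; b'] by rewrite -H set21.
have : b \in [set a'; b'] by rewrite -H set22.
have : a' \in [set a; b] by rewrite H set21.
move=> /set2P[] H1 /set2P[] H2 /set2P[] H3; subst; try done; exfalso; lia.
Qed.

Definition F0 U := [set [set p.1; p.2] | p in SP U].
Definition W0 U := U :|: [set x | [exists p in SP U, (x == p.1) || (x == p.2)]].

Lemma sub_rel_sep (U : {set 'I_n}) s t : e s t -> sepb U s t -> sub_rel (W0 U) (F0 U) s t.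
Proof.
move=> est sp.
have key : forall a b, e a b -> sepb U a b -> a < b ->
    sub_rel (W0 U) (F0 U) a b && sub_rel (W0 U) (F0 U) b a.
  move=> a b eab sab lab; have Hp : (a, b) \in SP U by rewrite !inE /= lab eab sab.
  have W1 : a \in W0 U by rewrite !inE; apply/orP; right; apply/exists_inP; exists (a, b); rewrite ?eqxx.
  have W2 : b \in W0 U by rewrite !inE; apply/orP; right; apply/exists_inP; exists (a, b); rewrite ?eqxx ?orbT.
  have F1 : [set a; b] \in F0 U by apply/imsetP; exists (a, b).
  by rewrite /sub_rel W1 W2 F1 setUC F1.
case: (ltngtP s t) => [lst|lts|est'].
- by case/andP: (key _ _ est sp lst).
- have sp' : sepb U t s by rewrite /sepb andbC.
  have ets : e t s by rewrite esym.
  by case/andP: (key t s ets sp' lts).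
- have H : s = t by apply: val_inj.
  by rewrite H eirr in est.
Qed.

Lemma sub_rel_sym (W : {set 'I_n}) F : symmetric (sub_rel W F).
Proof. by move=> u v; rewrite /sub_rel andbCA setUC. Qed.

Lemma uniq_path u v : exists p, [/\ path e u p, uniq (u :: p) & last u p = v].
Proof.
have /connectP[p ep ->] := econn u v.
by case/shortenP: ep => p' ep' up' _; exists p'.
Qed.

Lemma Kconn (U : {set 'I_n}) u v p : u \in U -> v \in U -> path e u p -> uniq (u :: p) -> last u p = v ->
  forall z, z \in u :: p -> connect (sub_rel (W0 U) (F0 U)) u z.
Proof.
move=> uU vU ep up lp z zp; subst v.
apply: (path_connect _ zp); apply: steps_path => s t st.
have [est c1 c2 _ _] := path_sep ep up st.
apply: sub_rel_sep => //; rewrite /sepb; apply/andP; split; apply/subsetPn.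
  by exists u => //; rewrite (sideC est) inE negbK inE.
have ets : e t s by rewrite esym.
by exists (last u p) => //; rewrite (sideC ets) !inE negbK setUC.
Qed.

Lemma upper (U : {set 'I_n}) : U != set0 -> is_connected_subgraph e (W0 U) (F0 U).
Proof.
move=> /set0Pn[u0 u0U].
have hU : forall x, x \in U -> connect (sub_rel (W0 U) (F0 U)) u0 x.
  move=> x xU; have [p [ep up lp]] := uniq_path u0 x.
  by apply: (Kconn u0U xU ep up lp); rewrite -lp mem_last.
have hW : forall x, x \in W0 U -> connect (sub_rel (W0 U) (F0 U)) u0 x.
  move=> x; rewrite inE => /orP[/hU //|]; rewrite inE => /exists_inP[[a b] Hp Hx].
  move: Hp; rewrite !inE /= => /andP[/andP[lab eab] /andP[/subsetPn[u uU uB] /subsetPn[v vU vA]]].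
  have [q [eq uq lq]] := uniq_path u v.
  have uA : u \in side a b by move: uB; rewrite (sideC eab) inE negbK.
  have vA' : ~~ ((fun x => x \in side a b) (last u q)) by rewrite lq.
  have [s [t [est sA tA sq tq]]] :=
    @cross_path _ e (fun x => x \in side a b) u q eq uA vA'.
  have tB : t \in side b a by rewrite (sideC eab) inE.
  move: sA; rewrite inE => sA; move: tB; rewrite inE setUC => tB.
  have Hst := cross_edge eab sA tB est.
  have xq : x \in u :: q.
    have : x \in [set a; b] by rewrite in_set2.
    by rewrite -Hst => /set2P[]->.
  exact: connect_trans (hU u uU) (Kconn uU vU eq uq lq xq).
apply/andP; split.
  apply/forall_inP => f /imsetP[[a b] Hp ->] /=.
  apply/existsP; exists a; apply/existsP; exists b.
  have := Hp; rewrite !inE /= => /andP[/andP[_ ->] _]; rewrite eqxx andbT /=.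
  by apply/andP; split; apply/orP; right; apply/exists_inP; exists (a, b); rewrite ?eqxx ?orbT.
apply/forall_inP => x xW; apply/forall_inP => y yW.
apply: connect_trans (hW y yW).
by rewrite (sym_connect_sym (@sub_rel_sym (W0 U) (F0 U))); apply: hW.
Qed.

Lemma lower (U W : {set 'I_n}) F : is_connected_subgraph e W F -> U \subset W -> #|SP U| <= #|F|.
Proof.
move=> /andP[/forall_inP Hs /forall_inP Hc] UW.
rewrite -(card_in_imset (f := fun p : 'I_n * 'I_n => [set p.1; p.2])); last first.
  by move=> p q /SP_EP Hp /SP_EP Hq; apply: pair_inj.
apply/subset_leq_card/subsetP => f /imsetP[[a b] Hp ->] /=.
move: Hp; rewrite !inE /= => /andP[/andP[lab eab] /andP[/subsetPn[u uU uB] /subsetPn[v vU vA]]].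
have := Hc u (subsetP UW _ uU); move/forall_inP => /(_ v (subsetP UW _ vU)) /connectP[q hq lq].
have uA : u \in side a b by move: uB; rewrite (sideC eab) inE negbK.
have vA' : ~~ ((fun x => x \in side a b) (last u q)) by rewrite -lq.
have [s [t [hst sA tA _ _]]] :=
    @cross_path _ _ (fun x => x \in side a b) u q hq uA vA'.
have tB : t \in side b a by rewrite (sideC eab) inE.
move: sA; rewrite inE => sA; move: tB; rewrite inE setUC => tB.
move: hst; rewrite /sub_rel => /and3P[_ _ stF].
have /existsP[x /existsP[y /and4P[exy _ _ /eqP Hf]]] := Hs _ stF.
have est := set2_e Hf exy.
by rewrite -(cross_edge eab sA tB est).
Qed.

Definition far r (p : 'I_n * 'I_n) := if connect (del [set p.1; p.2]) r p.1 then p.2 else p.1.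

Lemma far_spec r a b : e a b -> exists y, [/\ [set a; b] = [set far r (a, b); y],
  e (far r (a, b)) y & connect (del [set far r (a, b); y]) r y].
Proof.
move=> eab; rewrite /far /=; case: ifP => H.
  by exists a; split; [rewrite setUC | rewrite esym | rewrite setUC].
by exists b; split => //; have := side_cover a b r; rewrite H.
Qed.

Lemma two_edges r x y z : y != z -> e x y -> e x z ->
  connect (del [set x; y]) r y -> connect (del [set x; z]) r z -> False.
Proof.
move=> yz exy exz cy cz.
have H : forall s t, del [set x; y] s t -> del [set x; z] s t || (s \in [set x; z]).
  move=> s t /andP[est _]; rewrite /del est /=; case: eqP => // <-; by rewrite set21 orbT.
rewrite del_csym in cy.
have dxy : del [set x; z] x y.
  rewrite /del exy /=; apply/eqP => Hs; have : y \in [set x; z] by rewrite -Hs set22.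
  case/set2P => Hy; [by rewrite Hy eirr in exy | by rewrite Hy eqxx in yz].
have dzx : del [set x; y] z x.
  rewrite /del esym exz /=; apply/eqP => Hs; have : z \in [set x; y] by rewrite -Hs set21.
  case/set2P => Hz; [by rewrite Hz eirr in exz | by rewrite Hz eqxx in yz].
case: (conn_split H cy) => [cyr | [w /set2P[]-> [_ cw]]].
- move/negP: (noconn exz); apply.
  exact: connect_trans (connect1 dxy) (connect_trans cyr cz).
- by move/negP: (noconn exy); apply; rewrite del_csym.
- move/negP: (noconn exy); apply; rewrite del_csym.
  exact: connect_trans cw (connect1 dzx).
Qed.

Lemma far_inj r : {in EP &, injective (far r)}.
Proof.
move=> [a b] [a' b'] Hp Hq Hf.
have := Hp; have := Hq; rewrite !inE /= => /andP[_ eab'] /andP[_ eab].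
have [y [s1 e1 c1]] := far_spec r eab.
have [z [s2 e2 c2]] := far_spec r eab'.
rewrite -Hf in s2 e2 c2.
case: (eqVneq y z) => [yz | yz].
  by apply: pair_inj => //=; rewrite s1 s2 yz.
by case: (two_edges yz e1 e2 c1 c2).
Qed.

Lemma EP_card (r : 'I_n) : #|EP| <= n.
Proof.
rewrite -(card_in_imset (@far_inj r)); apply: leq_trans (max_card _) _.
by rewrite card_ord.
Qed.

Lemma steinerE (U : {set 'I_n}) : U != set0 -> steiner e U = #|SP U|.
Proof.
move=> U0; have [r _] := set0Pn _ U0.
apply/eqP; rewrite eqn_leq; apply/andP; split.
  have -> : #|SP U| = #|(W0 U, F0 U).2|.
    by rewrite /= card_in_imset // => p q /SP_EP Hp /SP_EP Hq; apply: pair_inj.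
  by apply: bigmin_le => /=; rewrite upper // subsetUl.
apply: bigmin_ge.
  apply: leq_trans (EP_card r); apply: subset_leq_card; apply/subsetP => p; exact: SP_EP.
by move=> [W F] /andP[H1 H2]; exact: lower H1 H2.
Qed.

End Tree.

From mathcomp Require Import ring lra.
Local Open Scope ring_scope.

Lemma prod_sub (R : realFieldType) (n k : nat) (c : 'I_n -> R) (A : {set 'I_n})
   (i : {ffun 'I_k -> 'I_n}) :
  ([set i j | j : 'I_k] \subset A)%:R * \prod_(j : 'I_k) c (i j)
  = \prod_(j : 'I_k) ((i j \in A)%:R * c (i j)).
Proof.
rewrite big_split /=; congr (_ * _).
case: (boolP ([set i j | j : 'I_k] \subset A)) => H.
  rewrite big1 // => j _; rewrite (subsetP H) //; by apply/imsetP; exists j.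
move/subsetPn: H => [x /imsetP[j _ ->] xA].
by rewrite (bigD1 j) //= (negbTE xA) mul0r.
Qed.

Lemma powsum (R : realFieldType) (n k : nat) (c : 'I_n -> R) (A : {set 'I_n}) :
  \sum_(i : {ffun 'I_k -> 'I_n}) ([set i j | j : 'I_k] \subset A)%:R * \prod_(j : 'I_k) c (i j)
  = (\sum_(x : 'I_n) (x \in A)%:R * c x) ^+ k.
Proof.
have -> : (\sum_(x : 'I_n) (x \in A)%:R * c x) ^+ k
   = \prod_(j : 'I_k) \sum_(x : 'I_n) (x \in A)%:R * c x by rewrite prodr_const card_ord.
rewrite bigA_distr_bigA.
by apply: eq_bigr => i _; rewrite prod_sub.
Qed.

Lemma powsum0 (R : realFieldType) (n k : nat) (c : 'I_n -> R) :
  (0 < k)%N -> \sum_(x : 'I_n) c x = 0 ->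
  \sum_(i : {ffun 'I_k -> 'I_n}) \prod_(j : 'I_k) c (i j) = 0.
Proof.
move=> k0 hc; rewrite -(bigA_distr_bigA (fun (_ : 'I_k) (x : 'I_n) => c x)) /= prodr_const hc card_ord expr0n.
by case: k k0.
Qed.

Theorem mainTheorem3 (R : realFieldType) (n k : nat) (e : rel 'I_n)
  (hT : is_tree e) (hn : (2 <= n)%N) (hk : (3 <= k)%N) (hodd : odd k)
  (c : 'I_n -> R) (hc : \sum_(i : 'I_n) c i = 0) :
  steiner_form k e c = 0.
Proof.
move: hT => [esym [eirr [econn eacyc]]].
have k0 : (0 < k)%N by apply: leq_trans hk.
rewrite /steiner_form.
have im0 : forall i : {ffun 'I_k -> 'I_n}, [set i j | j : 'I_k] != set0.
  by move=> i; apply/set0Pn; exists (i (Ordinal k0)); apply/imsetP; exists (Ordinal k0).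
under eq_bigr => i _ do rewrite (steinerE esym eirr econn eacyc (im0 i)).
have cardSP : forall U, (#|SP e U|%:R : R) = \sum_(p in EP e) (sepb e U p.1 p.2)%:R.
  move=> U; rewrite -sumr_const big_mkcond [RHS]big_mkcond /=.
  apply: eq_bigr => p _; rewrite inE; case: (p \in EP e) => //=.
  by case: (sepb e U p.1 p.2).
under eq_bigr => i _ do rewrite cardSP mulr_suml.
rewrite exchange_big /=; apply: big1 => [[a b]] /=; rewrite inE /= => /andP[_ eab].
set A := side e a b.
have BA : side e b a = ~: A by apply: sideC.
have sv : forall U : {set 'I_n}, U != set0 ->
    ((sepb e U a b)%:R : R) = 1 - (U \subset A)%:R - (U \subset side e b a)%:R.
  move=> U /set0Pn[u uU]; rewrite /sepb.
  case HA: (U \subset A); case HB: (U \subset side e b a) => /=.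
  - have h1 := subsetP HA u uU; have h2 := subsetP HB u uU.
    by rewrite BA inE h1 in h2.
  - by rewrite subrr sub0r oppr0.
  - by rewrite subr0 subrr.
  - by rewrite !subr0.
under eq_bigr => i _ do rewrite (sv _ (im0 i)) !mulrBl mul1r.
rewrite !sumrB powsum0 // !powsum.
set sA := \sum_(x : 'I_n) (x \in A)%:R * c x.
have sB : \sum_(x : 'I_n) (x \in side e b a)%:R * c x = - sA.
  apply/eqP; rewrite -addr_eq0 /sA addrC -big_split /=; apply/eqP.
  rewrite -[RHS]hc; apply: eq_bigr => x _; rewrite BA in_setC; case: (x \in A) => /=;
  by rewrite ?mulr1n ?mulr0n ?mul1r ?mul0r ?addr0 ?add0r.
rewrite sB exprNn -signr_odd hodd expr1.
ring.
Qed.
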